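(* Let $\mathbf{S}=\mathbf{V}\boldsymbol{\Lambda}\mathbf{V}^{\mathsf{H}}$ and $\hat{\mathbf{S}}$ be $N\times N$ graph shift operators. Let $\mathbf{E}=\mathbf{S}-\mathbf{P}_0^{\mathsf{T}}\hat{\mathbf{S}}\mathbf{P}_0$, where $\mathbf{P}_0\in\mathcal{P}$ attains $\min_{\mathbf{P}\in\mathcal{P}}\|\mathbf{S}-\mathbf{P}^{\mathsf{T}}\hat{\mathbf{S}}\mathbf{P}\|$ (the absolute perturbation modulo permutation), with eigendecomposition $\mathbf{E}=\mathbf{U}\mathbf{M}\mathbf{U}^{\mathsf{H}}$, and assume $$\|\mathbf{S}-\hat{\mathbf{S}}\|_{\mathcal{P}}=\|\mathbf{E}\|\le\varepsilon.$$ Then for any Lipschitz filter $\mathbf{h}$ with Lipschitz constant $C$, $$\|\mathbf{H}(\mathbf{S})-\mathbf{H}(\hat{\mathbf{S}})\|_{\mathcal{P}}\le C\left(1+\delta\sqrt{N}\right)\varepsilon+\mathcal{O}(\varepsilon^2),$$ where $\delta:=(\|\mathbf{U}-\mathbf{V}\|_2+1)^2-1$ is the eigenvector misalignment between $\mathbf{S}$ and $\mathbf{E}$.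
   Context: A graph shift operator is a real symmetric $N\times N$ matrix; $\mathbf{S}=\mathbf{V}\boldsymbol{\Lambda}\mathbf{V}^{\mathsf{H}}$ with $\mathbf{V}$ orthonormal eigenvectors and $\boldsymbol{\Lambda}$ diagonal eigenvalues; likewise $\mathbf{U}$ orthonormal and $\mathbf{M}$ diagonal for $\mathbf{E}$. $\|\cdot\|$ and $\|\cdot\|_2$ denote the spectral (operator) norm for matrices and Euclidean norm for vectors. $\mathcal{P}$ is the set of $N\times N$ permutation matrices. For linear operators, $\|\mathbf{A}-\hat{\mathbf{A}}\|_{\mathcal{P}}=\min_{\mathbf{P}\in\mathcal{P}}\max_{\|\mathbf{x}\|=1}\|\mathbf{P}^{\mathsf{T}}(\mathbf{A}\mathbf{x})-\hat{\mathbf{A}}(\mathbf{P}^{\mathsf{T}}\mathbf{x})\|$. A filter is a coefficient sequence $\mathbf{h}=\{h_k\}_{k\ge0}$ defining $\mathbf{H}(\mathbf{S})=\sum_k h_k\mathbf{S}^k$ and frequency response $h(\lambda)=\sum_k h_k\lambda^k$ (an analytic function), required to satisfy $|h(\lambda)|\le1$. The filter is Lipschitz with constant $C>0$ if $|h(\lambda_2)-h(\lambda_1)|\le C|\lambda_2-\lambda_1|$ for all $\lambda_1,\lambda_2$. $\mathcal{O}(\varepsilon^2)$ denotes a term bounded by a constant times $\varepsilon^2$. *)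

(* Defs.v *)
From HB Require Import structures.
From mathcomp Require Import all_boot all_order all_algebra perm.
From mathcomp Require Import all_classical all_reals all_analysis.
Set Implicit Arguments. Unset Strict Implicit. Unset Printing Implicit Defensive.
Import Order.TTheory GRing.Theory Num.Theory numFieldNormedType.Exports.
Local Open Scope classical_set_scope.
Local Open Scope ring_scope.

Definition vnorm (R : realType) (N : nat) (x : 'cV[R]_N) : R :=
  Num.sqrt (\sum_(i < N) x i ord0 ^+ 2).

Definition opnorm (R : realType) (N : nat) (A : 'M[R]_N) : R :=
  sup [set vnorm (A *m x) | x in [set x : 'cV[R]_N | vnorm x = 1]].

(* ||A - Ahat||_P = min_{P in perms} max_{||x||=1} ||P^T (A x) - Ahat (P^T x)||
   = min_P opnorm (P^T A - Ahat P^T).  The min over the finite nonempty set of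
   permutation matrices is taken with seed the value at the identity. *)
Definition pnorm (R : realType) (N : nat) (A Ahat : 'M[R]_N) : R :=
  \big[Num.min/opnorm (A - Ahat)]_(s : 'S_N)
     opnorm ((perm_mx s)^T *m A - Ahat *m (perm_mx s)^T).

Definition gso (R : realType) (N : nat) (S : 'M[R]_N) : Prop := S^T = S.

Definition orthonormal_mx (R : realType) (N : nat) (V : 'M[R]_N) : Prop :=
  V^T *m V = 1%:M.

Definition freq_resp (R : realType) (h : nat -> R) (l : R) : R :=
  limn (series (fun k => h k * l ^+ k)).

Definition graph_filter (R : realType) (N : nat) (h : nat -> R) (S : 'M[R]_N)
  : 'M[R]_N :=
  \matrix_(i, j) limn (series (fun k => h k * (S ^+ k) i j)).

(* Main.v *)
Require Import Defs.
From HB Require Import structures.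
From mathcomp Require Import all_boot all_order all_algebra perm.
From mathcomp Require Import all_classical all_reals all_analysis.
From mathcomp Require Import complex ring lra.
Import Order.TTheory GRing.Theory Num.Theory numFieldNormedType.Exports.
Set Implicit Arguments. Unset Strict Implicit. Unset Printing Implicit Defensive.
Local Open Scope classical_set_scope.
Local Open Scope ring_scope.

Section Spec.
Variable R : rcfType.

Lemma sym_eig_row n (A : 'M[R]_n.+1) : A^T = A ->
  exists r : R, exists2 v : 'rV[R]_n.+1, v *m A = r *: v & v != 0.
Proof.
move=> sA.
pose f := real_complex R.
pose Ac := map_mx f A.
have Asym : Ac \is symmetricmx.
  apply/is_hermitianmxP; rewrite expr0 scale1r map_mx_id // /Ac map_trmx sA //.
have Areal : Ac \is a realmx.
  apply/mxOverP => i j; rewrite mxE; apply/complex_realP; by exists (A i j).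
have Aherm := realsym_hermsym Asym Areal.
have /orthomx_spectralP Aeq := hermitian_normalmx Aherm.
have dreal := hermitian_spectral_diag_real Aherm.
set P := spectralmx Ac in Aeq; set d := spectral_diag Ac in Aeq dreal.
have Pu : P \in unitmx by apply: spectral_unit.
have : eigenvalue Ac (d 0 0).
  apply/eigenvalueP; exists (row 0 P).
    rewrite Aeq !mulmxA -!row_mul mulmxV // mul1mx.
    by rewrite mul_diag_mx; apply/rowP=> j; rewrite !mxE.
  apply/negP=> /eqP P0.
  have : row 0 (P *m invmx P) = 0 by rewrite row_mul P0 mul0mx.
  rewrite mulmxV // => /rowP /(_ 0); rewrite !mxE eqxx /= => /eqP.
  by rewrite oner_eq0.
have /complex_realP [r ->] : d 0 0 \is Num.real by apply: (mxOverP dreal).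
rewrite (eigenvalue_map f) => /eigenvalueP [v vA v0].
by exists r; exists v.
Qed.
End Spec.

Section Spec2.
Variable R : rcfType.

Lemma trZ m n (k : R) (M : 'M[R]_(m, n)) : (k *: M)^T = k *: M^T.
Proof. by apply/matrixP=> i j; rewrite !mxE. Qed.
Lemma trB m n (M M' : 'M[R]_(m, n)) : (M - M')^T = M^T - M'^T.
Proof. by apply/matrixP=> i j; rewrite !mxE. Qed.
Lemma trD m n (M M' : 'M[R]_(m, n)) : (M + M')^T = M^T + M'^T.
Proof. by apply/matrixP=> i j; rewrite !mxE. Qed.

Lemma mx11E (M : 'M[R]_1) : M = (M 0 0)%:M.
Proof. by apply/matrixP=> i j; rewrite !ord1 !mxE eqxx mulr1n. Qed.

Lemma trmx_sumsq n (w : 'cV[R]_n) : (w^T *m w) 0 0 = \sum_i w i 0 ^+ 2.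
Proof. by rewrite mxE; apply: eq_bigr => i _; rewrite mxE expr2. Qed.

Lemma sym_eig_col n (A : 'M[R]_n.+1) : A^T = A ->
  exists r : R, exists x : 'cV[R]_n.+1, x^T *m x = 1%:M /\ A *m x = r *: x.
Proof.
move=> sA; have [r [v vA v0]] := @sym_eig_row R n A sA.
pose c := (v *m v^T) 0 0.
have cE : c = \sum_i v 0 i ^+ 2.
  by rewrite /c mxE; apply: eq_bigr => i _; rewrite mxE expr2.
have c0 : 0 < c.
  rewrite lt_def cE sumr_ge0 ?andbT; last by move=> i _; rewrite sqr_ge0.
  apply/negP => /eqP /psumr_eq0P H; apply/negP: v0; rewrite negbK.
  apply/eqP/rowP => i; rewrite mxE; apply/eqP; rewrite -sqrf_eq0.
  by apply/eqP; apply: H => // j _; rewrite sqr_ge0.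
exists r; exists ((Num.sqrt c)^-1 *: v^T); split.
  rewrite trZ trmxK -scalemxAl -scalemxAr scalerA.
  rewrite [v *m v^T]mx11E -/c -invrM ?unitfE ?gt_eqF ?sqrtr_gt0 //.
  by rewrite -expr2 sqr_sqrtr ?ltW // scale_scalar_mx mulVf ?gt_eqF.
by rewrite -scalemxAr -{1}sA -trmx_mul vA trZ scalerA mulrC -scalerA.
Qed.

Lemma householder n (x : 'cV[R]_n.+1) : x^T *m x = 1%:M ->
  exists H : 'M[R]_n.+1, H^T *m H = 1%:M /\ H *m delta_mx 0 0 = x.
Proof.
move=> xx.
pose e : 'cV[R]_n.+1 := delta_mx 0 0.
have eE (M : 'M[R]_(1, n.+1)) : M *m e = (M 0 0)%:M.
  by rewrite /e -colE [LHS]mx11E mxE.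
have ee : e^T *m e = 1%:M by rewrite eE mxE mxE eqxx.
have xe : x^T *m e = (x 0 0)%:M by rewrite eE mxE.
have ex : e^T *m x = (x 0 0)%:M by rewrite -[e^T *m x]trmxK trmx_mul trmxK xe tr_scalar_mx.
have [->|xne] := eqVneq x e; first by exists 1%:M; rewrite trmx1 !mul1mx.
pose a := x 0 0; pose w := x - e.
have ww : w^T *m w = (2 - 2 * a)%:M.
  rewrite trB mulmxBl !mulmxBr xx xe ex ee.
  apply/matrixP => i j; rewrite !ord1 !mxE eqxx /a !mulr1n; ring.
have a1 : 1 - a != 0.
  apply/negP => /eqP a1; apply/negP: xne; rewrite negbK.
  have : (w^T *m w) 0 0 = 0.
    by rewrite ww mxE eqxx mulr1n; apply/eqP; rewrite subr_eq0; apply/eqP; lra.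
  rewrite trmx_sumsq => /psumr_eq0P H.
  rewrite -subr_eq0; apply/eqP/colP => i; rewrite [RHS]mxE; apply/eqP.
  rewrite -sqrf_eq0; apply/eqP; apply: H => // j _; exact: sqr_ge0.
pose k := (1 - a)^-1; pose W := w *m w^T.
have W2 : W *m W = (2 - 2 * a) *: W.
  by rewrite /W mulmxA -[w *m w^T *m w]mulmxA ww mul_mx_scalar -scalemxAl.
have Wt : W^T = W by rewrite /W trmx_mul trmxK.
exists (1%:M - k *: W); split.
  rewrite trB trmx1 trZ Wt mulmxBl !mulmxBr !mul1mx mulmx1 -!scalemxAr -scalemxAl W2 !scalerA.
  have -> : k * k * (2 - 2 * a) = k + k.
    rewrite /k; field; done.
  rewrite scalerDl; apply/matrixP => i j; rewrite !mxE; ring.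
rewrite mulmxBl mul1mx -scalemxAl /W -mulmxA.
have -> : w^T *m e = (a - 1)%:M.
  by rewrite trB mulmxBl xe ee; apply/matrixP => i j; rewrite !ord1 !mxE eqxx !mulr1n.
rewrite mul_mx_scalar scalerA.
have -> : k * (a - 1) = -1 by rewrite /k; field; done.
by rewrite scaleN1r opprK /w addrC subrK.
Qed.
End Spec2.

Section Spec3.
Variable R : rcfType.

Lemma col_delta0 m : (delta_mx 0 0 : 'cV[R]_m.+1) = col_mx (1%:M : 'M[R]_1) (0 : 'M[R]_(m, 1)).
Proof.
apply/colP => i; rewrite !mxE; case: splitP => j /= eij; rewrite !mxE.
  have -> : i = 0 by apply/val_inj; rewrite /= eij ord1.
  by rewrite !ord1.
have -> : (i == 0) = false by apply/negbTE; rewrite -val_eqE /= eij.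
by [].
Qed.

Lemma diag11 (r : R) : diag_mx (r%:M : 'rV[R]_1) = r%:M.
Proof. by apply/matrixP => i j; rewrite !ord1 !mxE eqxx. Qed.

Lemma spectral_step m
  (IH : forall A : 'M[R]_m, A^T = A -> exists Q : 'M[R]_m, exists d : 'rV[R]_m,
    Q^T *m Q = 1%:M /\ A = Q *m diag_mx d *m Q^T)
  (A H : 'M[R]_(1 + m)) (r : R) : A^T = A -> H^T *m H = 1%:M ->
  H^T *m A *m H *m col_mx (1%:M : 'M[R]_1) (0 : 'M[R]_(m, 1)) = r *: col_mx (1%:M : 'M[R]_1) (0 : 'M[R]_(m, 1)) ->
  exists Q : 'M[R]_(1 + m), exists d : 'rV[R]_(1 + m),
    Q^T *m Q = 1%:M /\ A = Q *m diag_mx d *m Q^T.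
Proof.
move=> sA HH Be.
have HHt : H *m H^T = 1%:M by apply: mulmx1C.
pose B : 'M[R]_(1 + m) := H^T *m A *m H.
have Bsym : B^T = B by rewrite /B !trmx_mul trmxK sA mulmxA.
have Bblk := submxK B.
set ul := ulsubmx B in Bblk; set ur := ursubmx B in Bblk.
set dl := dlsubmx B in Bblk; set dr := drsubmx B in Bblk.
move: Be; rewrite -/B -Bblk mul_block_col !mulmx1 !mulmx0 !addr0 scale_col_mx.
move=> /eq_col_mx [ulE dlE]; rewrite scaler0 in dlE.
move: Bsym; rewrite -Bblk tr_block_mx => /eq_block_mx [_ urE _ drsym].
have urE' : ur = 0 by rewrite -urE dlE trmx0.
have [Q1 [d1 [Q1Q1 drE]]] := IH dr drsym.
exists (H *m block_mx (1%:M : 'M[R]_1) 0 0 Q1); exists (row_mx (r%:M : 'rV[R]_1) d1); split.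
  rewrite trmx_mul tr_block_mx !trmx0 trmx1 mulmxA -[_ *m H^T *m H]mulmxA HH mulmx1.
  rewrite mulmx_block ?mulmx0 ?mul0mx ?mulmx1 ?mul1mx ?addr0 ?add0r Q1Q1.
  by rewrite -scalar_mx_block.
have -> : A = H *m B *m H^T by rewrite /B !mulmxA HHt mul1mx -mulmxA HHt mulmx1.
rewrite -Bblk ulE dlE urE' drE diag_mx_row diag11 trmx_mul tr_block_mx !trmx0 trmx1.
rewrite -!mulmxA; congr (_ *m _); rewrite !mulmxA; congr (_ *m _).
rewrite !mulmx_block ?mulmx0 ?mul0mx ?mulmx1 ?mul1mx ?addr0 ?add0r.
by rewrite mul0mx scale_scalar_mx mulr1.
Qed.

Lemma sym_spectral n (A : 'M[R]_n) : A^T = A ->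
  exists Q : 'M[R]_n, exists d : 'rV[R]_n,
    Q^T *m Q = 1%:M /\ A = Q *m diag_mx d *m Q^T.
Proof.
elim: n A => [|m IH] A sA.
  exists 1%:M; exists 0; split; first by rewrite trmx1 mul1mx.
  by apply/matrixP => [[]].
have [r [x [xx Ax]]] := @sym_eig_col R m A sA.
have [H [HH He]] := @householder R m x xx.
have Be0 : H^T *m A *m H *m (delta_mx 0 0 : 'cV_m.+1) = r *: delta_mx 0 0.
  by rewrite -mulmxA He -mulmxA Ax -scalemxAr -He mulmxA HH mul1mx.
move: Be0; rewrite col_delta0 => Be.
exact: (@spectral_step m IH A H r sA HH Be).
Qed.
End Spec3.

Section Filt.
Variable R : realType.

Lemma cvg_finsum (I : finType) (u : I -> nat -> R) (a : I -> R) :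
  (forall i, u i @ \oo --> a i) ->
  (fun n => \sum_i u i n) @ \oo --> \sum_i a i.
Proof.
move=> ua.
suff H : forall s : seq I, (fun n => \sum_(i <- s) u i n) @ \oo --> \sum_(i <- s) a i.
  exact: H.
elim => [|i s IH].
  have -> : (fun n => \sum_(i <- [::]) u i n) = (fun=> 0) by apply/funext => n; rewrite big_nil.
  rewrite big_nil; exact: cvg_cst.
have -> : (fun n => \sum_(j <- i :: s) u j n) = (fun n => u i n + \sum_(j <- s) u j n).
  by apply/funext => n; rewrite big_cons.
rewrite big_cons; exact: cvgD.
Qed.

Lemma expr_conj n (Q : 'M[R]_n) (d : 'rV[R]_n) k : Q^T *m Q = 1%:M ->
  (Q *m diag_mx d *m Q^T) ^+ k = Q *m diag_mx (\row_i d 0 i ^+ k) *m Q^T.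
Proof.
move=> QQ; have QQt : Q *m Q^T = 1%:M by apply: mulmx1C.
elim: k => [|k IH].
  rewrite expr0; apply/matrixP => i j.
  have -> : Q *m diag_mx (\row_i d 0 i ^+ 0) *m Q^T = Q *m Q^T.
    by congr (_ *m _); rewrite -[RHS]mulmx1; congr (_ *m _); apply/matrixP => a b; rewrite !mxE expr0.
  by rewrite QQt.
rewrite exprS IH -mulmxE !mulmxA -[_ *m Q^T *m Q]mulmxA QQ mulmx1.
congr (_ *m _); rewrite -mulmxA; congr (_ *m _).
by apply/matrixP => a b; rewrite mul_diag_mx !mxE; case: eqP => [->|]; rewrite ?mulr0n ?mulr1n ?mulr0 // exprS.
Qed.

Lemma filter_conj n (h : nat -> R) (Q : 'M[R]_n) (d : 'rV[R]_n) :
  (forall l : R, cvgn (series (fun k => h k * l ^+ k))) ->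
  Q^T *m Q = 1%:M ->
  graph_filter h (Q *m diag_mx d *m Q^T) =
  Q *m diag_mx (\row_i freq_resp h (d 0 i)) *m Q^T.
Proof.
move=> hc QQ; apply/matrixP => i j; rewrite mxE.
have entry (e : 'rV[R]_n) : (Q *m diag_mx e *m Q^T) i j = \sum_l (Q i l * Q j l) * e 0 l.
  rewrite mxE; apply: eq_bigr => l _; rewrite mul_mx_diag !mxE; ring.
rewrite entry; apply: cvg_lim => //.
have -> : series (fun k => h k * ((Q *m diag_mx d *m Q^T) ^+ k) i j) =
   (fun m => \sum_l (Q i l * Q j l) * series (fun k => h k * d 0 l ^+ k) m).
  apply/funext => m; rewrite /series /=.
  under eq_bigr do rewrite expr_conj // entry mulr_sumr.
  rewrite exchange_big /=; apply: eq_bigr => l _; rewrite mulr_sumr.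
  by apply: eq_bigr => k _; rewrite mxE; ring.
apply: cvg_finsum => l; rewrite mxE.
apply: cvgM; first exact: cvg_cst.
exact: hc.
Qed.
End Filt.

Section Norms.
Variable R : realType.

Definition gn (I : finType) (x : I -> R) := Num.sqrt (\sum_i x i ^+ 2).

Lemma le_sq (a b : R) : 0 <= b -> a ^+ 2 <= b ^+ 2 -> a <= b.
Proof.
move=> b0 ab; have [a0|a0] := leP a 0; first exact: le_trans a0 b0.
by rewrite -(@ler_pXn2r _ 2) // nnegrE ltW.
Qed.

Lemma sumsq_ge0 (I : finType) (x : I -> R) : 0 <= \sum_i x i ^+ 2.
Proof. by apply: sumr_ge0 => i _; rewrite sqr_ge0. Qed.

Lemma gn_ge0 (I : finType) (x : I -> R) : 0 <= gn x.
Proof. exact: sqrtr_ge0. Qed.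

Lemma gn_sq (I : finType) (x : I -> R) : gn x ^+ 2 = \sum_i x i ^+ 2.
Proof. by rewrite sqr_sqrtr // sumsq_ge0. Qed.

Lemma cs_sq (I : finType) (x y : I -> R) :
  (\sum_i x i * y i) ^+ 2 <= (\sum_i x i ^+ 2) * (\sum_i y i ^+ 2).
Proof.
have E : \sum_i \sum_j (x i * y j - x j * y i) ^+ 2 =
   2 * ((\sum_i x i ^+ 2) * (\sum_i y i ^+ 2) - (\sum_i x i * y i) ^+ 2).
  have -> : \sum_i \sum_j (x i * y j - x j * y i) ^+ 2 =
     \sum_i \sum_j (x i ^+ 2 * y j ^+ 2) + \sum_i \sum_j (x j ^+ 2 * y i ^+ 2)
     - 2 * \sum_i \sum_j (x i * y i * (x j * y j)).
    rewrite mulr_sumr -!big_split -sumrB /=; apply: eq_bigr => i _.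
    rewrite mulr_sumr -!big_split -sumrB /=; apply: eq_bigr => j _; ring.
  rewrite [\sum_i \sum_j (x j ^+ 2 * y i ^+ 2)]exchange_big /=.
  rewrite expr2 mulr_suml mulr_suml.
  under [X in 2 * (X - _)]eq_bigr do rewrite mulr_sumr.
  under [X in 2 * (_ - X)]eq_bigr do rewrite mulr_sumr.
  ring.
rewrite -subr_ge0 -(@pmulr_rge0 _ 2) // -E.
by apply: sumr_ge0 => i _; apply: sumr_ge0 => j _; rewrite sqr_ge0.
Qed.

Lemma cs (I : finType) (x y : I -> R) : \sum_i x i * y i <= gn x * gn y.
Proof.
apply: le_sq; first by rewrite mulr_ge0 ?gn_ge0.
by rewrite exprMn !gn_sq cs_sq.
Qed.

Lemma gn_triangle (I : finType) (x y : I -> R) :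
  gn (fun i => x i + y i) <= gn x + gn y.
Proof.
apply: le_sq; first by rewrite addr_ge0 ?gn_ge0.
rewrite gn_sq sqrrD !gn_sq.
have -> : \sum_i (x i + y i) ^+ 2 = \sum_i x i ^+ 2 + 2 * \sum_i x i * y i + \sum_i y i ^+ 2.
  rewrite mulr_sumr -!big_split /=; apply: eq_bigr => i _; ring.
rewrite lerD2r -mulr_natr [_ * 2]mulrC lerD2l -[gn x * gn y *+ 2]mulr_natl.
by rewrite mulr1 ler_pM2l // cs.
Qed.

Lemma gn_le (I : finType) (x y : I -> R) (c : R) : 0 <= c ->
  (forall i, x i ^+ 2 <= c ^+ 2 * y i ^+ 2) -> gn x <= c * gn y.
Proof.
move=> c0 H; apply: le_sq; first by rewrite mulr_ge0 ?gn_ge0.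
by rewrite exprMn !gn_sq mulr_sumr; apply: ler_sum => i _; apply: H.
Qed.

Lemma gn_eq0 (I : finType) (x : I -> R) : gn x = 0 -> forall i, x i = 0.
Proof.
move=> /eqP; rewrite sqrtr_eq0 => H i.
have S0 : \sum_i x i ^+ 2 = 0 by apply/eqP; rewrite eq_le H sumsq_ge0.
have : x i ^+ 2 <= 0.
  rewrite -S0 (bigD1 i) //= lerDl; apply: sumr_ge0 => j _; exact: sqr_ge0.
move=> xi; apply/eqP; rewrite -sqrf_eq0 eq_le xi sqr_ge0 //.
Qed.

Lemma gn_ext (I : finType) (x y : I -> R) : (forall i, x i = y i) -> gn x = gn y.
Proof. by move=> H; rewrite /gn; congr Num.sqrt; apply: eq_bigr => i _; rewrite H. Qed.

End Norms.

Section MxNorms.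
Variable R : realType.
Variable n : nat.
Implicit Types (X Y Q : 'M[R]_n) (x y : 'cV[R]_n).

Definition frob X := gn (fun p : 'I_n * 'I_n => X p.1 p.2).

Lemma vnormE x : vnorm x = gn (fun i => x i ord0).
Proof. by []. Qed.

Lemma vnorm_ge0 x : 0 <= vnorm x.
Proof. exact: sqrtr_ge0. Qed.

Lemma frob_ge0 X : 0 <= frob X.
Proof. exact: gn_ge0. Qed.

Lemma vnorm_tr x : vnorm x = Num.sqrt ((x^T *m x) ord0 ord0).
Proof. by rewrite /vnorm mxE; congr Num.sqrt; apply: eq_bigr => i _; rewrite mxE expr2. Qed.

Lemma vnorm_orth Q x : Q^T *m Q = 1%:M -> vnorm (Q *m x) = vnorm x.
Proof. by move=> QQ; rewrite !vnorm_tr trmx_mul -mulmxA (mulmxA Q^T) QQ mul1mx. Qed.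

Lemma frobE X : frob X = Num.sqrt (\sum_i \sum_j X i j ^+ 2).
Proof. by rewrite /frob /gn pair_bigA. Qed.

Lemma frob_sq X : frob X ^+ 2 = \sum_i \sum_j X i j ^+ 2.
Proof. by rewrite /frob gn_sq pair_bigA. Qed.

Lemma frob_tr X : frob X = Num.sqrt (\tr (X^T *m X)).
Proof.
rewrite frobE exchange_big /=; congr Num.sqrt.
rewrite /mxtrace; apply: eq_bigr => j _; rewrite mxE; apply: eq_bigr => i _.
by rewrite mxE expr2.
Qed.

Lemma frob_orthl Q X : Q^T *m Q = 1%:M -> frob (Q *m X) = frob X.
Proof. by move=> QQ; rewrite !frob_tr trmx_mul -mulmxA (mulmxA Q^T) QQ mul1mx. Qed.

Lemma frob_orthr Q X : Q *m Q^T = 1%:M -> frob (X *m Q) = frob X.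
Proof.
move=> QQ; rewrite !frob_tr trmx_mul -mulmxA mxtrace_mulC -!mulmxA QQ mulmx1.
done.
Qed.

Lemma frob_trmx X : frob X^T = frob X.
Proof.
rewrite !frobE exchange_big /=; congr Num.sqrt.
by apply: eq_bigr => i _; apply: eq_bigr => j _; rewrite mxE.
Qed.

Lemma frob_triangle X Y : frob (X + Y) <= frob X + frob Y.
Proof.
rewrite /frob (@gn_ext _ _ _ (fun p => X p.1 p.2 + Y p.1 p.2)); last by move=> p; rewrite mxE.
exact: gn_triangle.
Qed.

Lemma vnorm_triangle x y : vnorm (x + y) <= vnorm x + vnorm y.
Proof.
rewrite !vnormE (@gn_ext _ _ _ (fun i => x i ord0 + y i ord0)); last by move=> i; rewrite mxE.
exact: gn_triangle.
Qed.

Lemma vnorm_scale c x : vnorm (c *: x) = `|c| * vnorm x.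
Proof.
rewrite /vnorm -sqrtr_sqr -sqrtrM ?sqr_ge0 // mulr_sumr; congr Num.sqrt.
by apply: eq_bigr => i _; rewrite mxE exprMn.
Qed.

Lemma vnorm_eq0 x : vnorm x = 0 -> x = 0.
Proof.
rewrite vnormE => /gn_eq0 H; apply/matrixP => i j; rewrite !ord1 mxE; exact: H.
Qed.

Lemma vnorm_mul X x : vnorm (X *m x) <= frob X * vnorm x.
Proof.
apply: le_sq; first by rewrite mulr_ge0 ?frob_ge0 ?vnorm_ge0.
rewrite exprMn frob_sq !vnormE !gn_sq mulr_suml; apply: ler_sum => i _.
rewrite mxE; exact: cs_sq.
Qed.

Lemma vnorm_diag (d : 'rV[R]_n) x c : 0 <= c -> (forall i, `|d 0 i| <= c) ->
  vnorm (diag_mx d *m x) <= c * vnorm x.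
Proof.
move=> c0 H; rewrite !vnormE; apply: gn_le => // i.
rewrite mul_diag_mx mxE exprMn ler_wpM2r ?sqr_ge0 //.
rewrite -[d 0 i ^+ 2](real_normK (num_real _)); apply: lerXn2r; rewrite ?nnegrE //; exact: H.
Qed.

Definition uset := [set x : 'cV[R]_n | vnorm x = 1].

Lemma opnE X : opnorm X = sup [set vnorm (X *m x) | x in uset].
Proof. by []. Qed.

Lemma opn_hasub X : has_ubound [set vnorm (X *m x) | x in uset].
Proof.
exists (frob X) => _ [x /= x1 <-].
by rewrite (le_trans (vnorm_mul X x)) // x1 mulr1.
Qed.

Lemma opn_ub X x : vnorm x = 1 -> vnorm (X *m x) <= opnorm X.
Proof. by move=> x1; apply: (ub_le_sup (opn_hasub X)); exists x. Qed.

Lemma opn_le X c : 0 <= c -> (forall x, vnorm x = 1 -> vnorm (X *m x) <= c) ->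
  opnorm X <= c.
Proof.
move=> c0 H; rewrite opnE.
have [[z Ez]|E0] := pselect (exists z : R, [set vnorm (X *m x) | x in uset] z).
  apply: ge_sup; first by exists z.
  by move=> _ [x /= x1 <-]; exact: H.
have -> : [set vnorm (X *m x) | x in uset] = set0.
  by apply/seteqP; split => // z Ez; apply: E0; exists z.
by rewrite sup0.
Qed.

Lemma opn_ge0 X : 0 <= opnorm X.
Proof.
rewrite opnE.
have [[z Ez]|E0] := pselect (exists z : R, [set vnorm (X *m x) | x in uset] z).
  apply: le_trans (ub_le_sup (opn_hasub X) Ez).
  by case: Ez => x _ <-; exact: vnorm_ge0.
have -> : [set vnorm (X *m x) | x in uset] = set0.
  by apply/seteqP; split => // z Ez; apply: E0; exists z.
by rewrite sup0.
Qed.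

Lemma opn_mul X x : vnorm (X *m x) <= opnorm X * vnorm x.
Proof.
have [v0|v0] := eqVneq (vnorm x) 0.
  rewrite (vnorm_eq0 v0) mulmx0; have z0 : vnorm (0 : 'cV[R]_n) = 0.
    by rewrite /vnorm big1 ?sqrtr0 // => i _; rewrite mxE expr0n.
  by rewrite z0 mulr0.
have vp : 0 < vnorm x by rewrite lt_def v0 vnorm_ge0.
have := opn_ub X (x := (vnorm x)^-1 *: x).
rewrite vnorm_scale -scalemxAr vnorm_scale ger0_norm ?invr_ge0 ?vnorm_ge0 //.
rewrite mulVf // => /(_ erefl).
move=> H; rewrite mulrC; have := ler_wpM2l (vnorm_ge0 x) H.
by rewrite mulrA mulfV ?mul1r // gt_eqF.
Qed.

Lemma opn_frob X : opnorm X <= frob X.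
Proof.
apply: opn_le; first exact: frob_ge0.
by move=> x x1; rewrite (le_trans (vnorm_mul X x)) // x1 mulr1.
Qed.

Lemma frob_opn X : frob X <= Num.sqrt n%:R * opnorm X.
Proof.
apply: le_sq; first by rewrite mulr_ge0 ?sqrtr_ge0 ?opn_ge0.
rewrite frob_sq exprMn sqr_sqrtr ?ler0n // exchange_big /=.
rewrite (_ : n%:R * opnorm X ^+ 2 = \sum_(j < n) opnorm X ^+ 2); last by rewrite sumr_const card_ord mulr_natl.
apply: ler_sum => j _.
have e1 : vnorm (delta_mx j 0 : 'cV[R]_n) = 1.
  rewrite /vnorm (bigD1 j) //= big1 ?addr0 ?mxE ?eqxx ?expr1n ?sqrtr1 //.
  by move=> i /negbTE ij; rewrite mxE ij expr0n.
have := opn_ub X e1; rewrite -colE.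
move=> H; have : vnorm (col j X) ^+ 2 <= opnorm X ^+ 2.
  by apply: lerXn2r; rewrite ?nnegrE ?vnorm_ge0 ?opn_ge0.
rewrite vnormE gn_sq => H2; apply: le_trans H2.
by apply: ler_sum => i _; rewrite mxE.
Qed.

Lemma opn_triangle X Y : opnorm (X + Y) <= opnorm X + opnorm Y.
Proof.
apply: opn_le; first by rewrite addr_ge0 ?opn_ge0.
move=> x x1; rewrite mulmxDl (le_trans (vnorm_triangle _ _)) //.
by rewrite lerD ?opn_ub.
Qed.

Lemma opn_orthl Q X : Q^T *m Q = 1%:M -> opnorm (Q *m X) <= opnorm X.
Proof.
move=> QQ; apply: opn_le; first exact: opn_ge0.
by move=> x x1; rewrite -mulmxA vnorm_orth // opn_ub.
Qed.

End MxNorms.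

Section MainSec.
Variable R : realType.

Lemma frob_lip n (V Q : 'M[R]_n) (a b : 'rV[R]_n) (f : R -> R) (C : R) :
  0 <= C -> V^T *m V = 1%:M -> Q^T *m Q = 1%:M ->
  (forall x y, `|f x - f y| <= C * `|x - y|) ->
  frob (V *m diag_mx (\row_i f (a 0 i)) *m V^T - Q *m diag_mx (\row_i f (b 0 i)) *m Q^T)
  <= C * frob (V *m diag_mx a *m V^T - Q *m diag_mx b *m Q^T).
Proof.
move=> C0 VV QQ fL.
have VVt : V *m V^T = 1%:M by apply: mulmx1C.
have QQt : Q *m Q^T = 1%:M by apply: mulmx1C.
pose W := V^T *m Q.
have key (D1 D2 : 'rV[R]_n) : frob (V *m diag_mx D1 *m V^T - Q *m diag_mx D2 *m Q^T) =
    frob (diag_mx D1 *m W - W *m diag_mx D2).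
  rewrite -(@frob_orthl _ _ V^T); last by rewrite trmxK.
  rewrite -(@frob_orthr _ _ Q) // mulmxBr mulmxBl !mulmxA VV mul1mx.
  by rewrite -!mulmxA QQ mulmx1 /W !mulmxA.
rewrite !key /frob; apply: gn_le => // [[i j]] /=.
rewrite !mul_diag_mx !mul_mx_diag !mxE.
set w := \sum_(j0 < n) _.
have -> : (f (a 0 i) * w - w * f (b 0 j)) ^+ 2 = w ^+ 2 * (f (a 0 i) - f (b 0 j)) ^+ 2 by ring.
have -> : C ^+ 2 * (a 0 i * w - w * b 0 j) ^+ 2 = w ^+ 2 * (C * (a 0 i - b 0 j)) ^+ 2 by ring.
rewrite ler_wpM2l ?sqr_ge0 //.
rewrite -[(f _ - f _) ^+ 2](real_normK (num_real _)).
rewrite -[(C * _) ^+ 2](real_normK (num_real _)).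
apply: lerXn2r; rewrite ?nnegrE ?normr_ge0 //.
by rewrite normrM (ger0_norm C0) fL.
Qed.

Lemma bigmin_le n (F : 'S_n -> R) x0 s1 : \big[Num.min/x0]_(s : 'S_n) F s <= F s1.
Proof. by rewrite (bigD1 s1) //= ge_min lexx. Qed.

Lemma diagB n (D1 D2 : 'rV[R]_n) : diag_mx D1 - diag_mx D2 = diag_mx (D1 - D2).
Proof.
apply/matrixP => i j; rewrite !mxE; case: eqP => _; rewrite ?mulr1n ?mulr0n ?subr0 //.
Qed.

End MainSec.


Unset Implicit Arguments.
Local Close Scope classical_set_scope.
Theorem theorem1 (R : realType) (N : nat) (S : 'M[R]_N)
  (V : 'M[R]_N) (lam : 'rV[R]_N) (h : nat -> R) (C : R) :
  gso S -> orthonormal_mx V -> S = V *m diag_mx lam *m V^T ->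
  (forall l : R, cvgn (series (fun k => h k * l ^+ k))) ->
  (forall l : R, `|freq_resp h l| <= 1) ->
  0 < C ->
  (forall l1 l2 : R, `|freq_resp h l2 - freq_resp h l1| <= C * `|l2 - l1|) ->
  exists K : R, exists eps0 : R, 0 < eps0 /\
  forall (Shat : 'M[R]_N) (s0 : 'S_N) (U : 'M[R]_N) (mu : 'rV[R]_N) (eps : R),
    gso Shat ->
    (forall s : 'S_N,
       opnorm (S - (perm_mx s0)^T *m Shat *m perm_mx s0)
       <= opnorm (S - (perm_mx s)^T *m Shat *m perm_mx s)) ->
    orthonormal_mx U ->
    S - (perm_mx s0)^T *m Shat *m perm_mx s0 = U *m diag_mx mu *m U^T ->
    opnorm (S - (perm_mx s0)^T *m Shat *m perm_mx s0) <= eps ->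
    eps <= eps0 ->
    let delta := (opnorm (U - V) + 1) ^+ 2 - 1 in
    pnorm (graph_filter h S) (graph_filter h Shat)
      <= C * (1 + delta * Num.sqrt (N%:R)) * eps + K * eps ^+ 2.
Proof.
move=> gS VV SE hc hb C0 hL.
exists 0; exists 1; split => //.
move=> Shat s0 U mu eps gSh _ UU EE Eeps _; cbv zeta.
set delta := (opnorm (U - V) + 1) ^+ 2 - 1.
rewrite mul0r addr0.
set f := freq_resp h.
have fL : forall x y, `|f x - f y| <= C * `|x - y|.
  by move=> x y; rewrite -normrN opprB [`|x - y|]distrC; apply: hL.
have VVt : V *m V^T = 1%:M by apply: mulmx1C.
have UUt : U *m U^T = 1%:M by apply: mulmx1C.
set P := (perm_mx s0 : 'M[R]_N).
have PP : P^T *m P = 1%:M by rewrite tr_perm_mx -perm_mxM mulVg perm_mx1.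
have PPt : P *m P^T = 1%:M by apply: mulmx1C.
set E := S - P^T *m Shat *m P in EE Eeps.
set M := diag_mx mu in EE.
pose T := P^T *m Shat *m P.
have Tsym : T^T = T by rewrite /T !trmx_mul trmxK gSh mulmxA.
have [Q [be [QQ TE]]] := @sym_spectral R N T Tsym.
have QQt : Q *m Q^T = 1%:M by apply: mulmx1C.
have ShE : Shat = (P *m Q) *m diag_mx be *m (P *m Q)^T.
  by rewrite trmx_mul !mulmxA -(mulmxA P Q) -(mulmxA _ _ Q^T) -TE /T !mulmxA PPt mul1mx -mulmxA PPt mulmx1.
have PQ : (P *m Q)^T *m (P *m Q) = 1%:M.
  by rewrite trmx_mul mulmxA -(mulmxA Q^T) PP mulmx1 QQ.
set fl := \row_i f (lam 0 i).
set fb := \row_i f (be 0 i).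
have HS : graph_filter h S = V *m diag_mx fl *m V^T by rewrite SE filter_conj.
have HSh : graph_filter h Shat = P *m (Q *m diag_mx fb *m Q^T) *m P^T.
  by rewrite ShE filter_conj // trmx_mul !mulmxA.
have eps0 : 0 <= eps by apply: le_trans (opn_ge0 _) Eeps.
set HT := Q *m diag_mx fb *m Q^T.
have step1 : pnorm (graph_filter h S) (graph_filter h Shat) <= opnorm (graph_filter h S - HT).
  apply: le_trans (bigmin_le _ _ s0^-1) _.
  rewrite tr_perm_mx invgK -/P HSh -!mulmxA PP mulmx1 -mulmxBr.
  by rewrite /HT -mulmxA; exact: opn_orthl.
apply: le_trans step1 _.
have Mb : forall x, vnorm (M *m x) <= eps * vnorm x.
  move=> x; rewrite -(@vnorm_orth _ _ U) // -(@vnorm_orth _ _ U x) //.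
  have -> : U *m (M *m x) = E *m (U *m x) by rewrite EE -!mulmxA (mulmxA U^T) UU mul1mx.
  apply: le_trans (opn_mul _ _) _; apply: ler_wpM2r; [exact: vnorm_ge0 | exact: Eeps].
have mub : forall i, `|mu 0 i| <= eps.
  move=> i; have := Mb (delta_mx i 0).
  have e1 : vnorm (delta_mx i 0 : 'cV[R]_N) = 1.
    rewrite /vnorm (bigD1 i) //= big1 ?addr0 ?mxE ?eqxx ?expr1n ?sqrtr1 //.
    by move=> j /negbTE ij; rewrite mxE ij expr0n.
  have -> : M *m (delta_mx i 0 : 'cV[R]_N) = mu 0 i *: delta_mx i 0.
    apply/matrixP => a b; rewrite mul_diag_mx !mxE.
    by case: eqP => [->|_]; rewrite ?mulr0 ?mulr1.
  by rewrite vnorm_scale e1 !mulr1.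
pose al := lam - mu.
set fa := \row_i f (al 0 i).
set HS' := V *m diag_mx fa *m V^T.
have -> : graph_filter h S - HT = (graph_filter h S - HS') + (HS' - HT).
  by rewrite addrA subrK.
apply: le_trans (opn_triangle _ _) _.
set t := opnorm (U - V).
have t0 : 0 <= t by apply: opn_ge0.
have part1 : opnorm (graph_filter h S - HS') <= C * eps.
  rewrite HS /HS' -mulmxBl -mulmxBr diagB.
  apply: opn_le; first by rewrite mulr_ge0 // ltW.
  move=> x x1; rewrite -!mulmxA vnorm_orth //.
  apply: le_trans (@vnorm_diag R N (fl - fa) (V^T *m x) (C * eps) _ _) _.
  - by rewrite mulr_ge0 // ltW.
  - move=> i; rewrite !mxE; apply: le_trans (fL _ _) _.
    apply: ler_wpM2l; first exact: ltW.
    by rewrite opprB addrC subrK.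
  by rewrite vnorm_orth ?trmxK // x1 mulr1.
have part2 : opnorm (HS' - HT) <= C * (2 * (Num.sqrt N%:R * (t * eps))).
  apply: (le_trans (opn_frob (HS' - HT))).
  apply: le_trans (frob_lip al be (ltW C0) VV QQ fL) _.
  rewrite -TE ler_pM2l //.
  have -> : V *m diag_mx al *m V^T - T = (U - V) *m M *m U^T + V *m M *m (U - V)^T.
    have -> : T = S - E by rewrite /E opprB addrC subrK.
    rewrite EE SE /al -diagB mulmxBr mulmxBl.
    rewrite trB !mulmxBl !mulmxBr -/M.
    set a := V *m diag_mx lam *m V^T; set b := V *m M *m V^T.
    set c := U *m M *m U^T; set d := V *m M *m U^T.
    by apply/matrixP => i j; rewrite !mxE; ring.
  apply: le_trans (frob_triangle _ _) _.
  have UtU : U^T *m U^T^T = 1%:M by rewrite trmxK.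
  rewrite (@frob_orthr R N U^T ((U - V) *m M) UtU) -mulmxA (@frob_orthl R N V _ VV).
  have -> : M *m (U - V)^T = ((U - V) *m M)^T by rewrite trmx_mul /M tr_diag_mx.
  rewrite frob_trmx -mulr2n -[_ *+ 2]mulr_natl ler_pM2l //.
  apply: le_trans (frob_opn _) _; apply: ler_wpM2l; first exact: sqrtr_ge0.
  apply: opn_le; first exact: mulr_ge0.
  move=> x x1; rewrite -mulmxA; apply: le_trans (opn_mul _ _) _.
  rewrite -/t; apply: ler_wpM2l => //; by rewrite (le_trans (Mb x)) // x1 mulr1.
apply: le_trans (lerD part1 part2) _.
rewrite /delta -/t.
have sN : 0 <= Num.sqrt (N%:R : R) by apply: sqrtr_ge0.
rewrite -subr_ge0.
have -> : C * (1 + ((t + 1) ^+ 2 - 1) * Num.sqrt N%:R) * eps -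
   (C * eps + C * (2 * (Num.sqrt N%:R * (t * eps)))) = C * (t ^+ 2 * (Num.sqrt N%:R * eps)).
  ring.
by apply: mulr_ge0; [exact: ltW | apply: mulr_ge0; [exact: sqr_ge0 | exact: mulr_ge0]].
Qed.
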